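(* Let $\Omega=\{1,\ldots,n\}$, $k\in\Omega$, and let $\phi$ be a generalized metric satisfying the triangle inequality, i.e. $\phi(x\|y)\le\phi(x\|z)+\phi(z\|y)$ for all distributions $x,y,z$ on a common finite set. Then $\widehat{\phi}_k(p\|q)\le\widehat{\phi}_k(p\|r)+\widehat{\phi}_k(r\|q)$ for all $\Omega$-point distributions $p,q,r$.
   Context: An $\Omega$-point distribution is a probability vector on $\Omega=\{1,\ldots,n\}$. $\phi$ assigns a real number $\phi(p\|q)$ to each pair of probability distributions on the same finite set. $\mathcal P_k(\Omega)$ is the set of partitions of $\Omega$ into exactly $k$ nonempty disjoint cells; for $\rho\in\mathcal P_k(\Omega)$, $\widehat p_\rho(a)=\sum_{i\in a}p(i)$ for $a\in\rho$ defines a distribution on the cells of $\rho$. The Sketch $\star$-metric is $\widehat{\phi}_k(p\|q)=\max_{\rho\in\mathcal P_k(\Omega)}\phi(\widehat p_\rho\|\widehat q_\rho)$. *)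

(* Defs.v *)
From HB Require Import structures.
From mathcomp Require Import all_boot all_order all_algebra.
Set Implicit Arguments. Unset Strict Implicit. Unset Printing Implicit Defensive.
Import Order.TTheory GRing.Theory Num.Theory.
Local Open Scope ring_scope.

Definition is_distr (R : realFieldType) (T : finType) (p : T -> R) : Prop :=
  (forall t, 0 <= p t) /\ \sum_(t : T) p t = 1.

(* phi assigns a real number to each pair of functions on the same finite set
   (only its values on distributions are relevant). *)
Definition divergence (R : realFieldType) := forall T : finType, (T -> R) -> (T -> R) -> R.

Definition triangle_ineq (R : realFieldType) (phi : divergence R) : Prop :=
  forall (T : finType) (x y z : T -> R),
    is_distr x -> is_distr y -> is_distr z ->
    phi T x y <= phi T x z + phi T z y.

Definition kpartition (n k : nat) (P : {set {set 'I_n}}) : bool :=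
  partition P [set: 'I_n] && (#|P| == k).

Definition cells (n : nat) (P : {set {set 'I_n}}) : finType :=
  {A : {set 'I_n} | A \in P}.

Definition coarsen (R : realFieldType) (n : nat) (P : {set {set 'I_n}})
  (p : 'I_n -> R) : cells P -> R :=
  fun a => \sum_(i in val a) p i.

Definition sketch_val (R : realFieldType) (phi : divergence R) (n : nat)
  (p q : 'I_n -> R) (P : {set {set 'I_n}}) : R :=
  phi (cells P) (@coarsen R n P p) (@coarsen R n P q).

(* The seed of the max is an element of the (finite) list itself, so this is the
   exact maximum whenever some k-partition exists (i.e. 1 <= k <= n). *)
Definition sketch (R : realFieldType) (phi : divergence R) (n k : nat)
  (p q : 'I_n -> R) : R :=
  let s := [seq sketch_val phi p q P | P <- enum [pred P : {set {set 'I_n}} | kpartition k P]] in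
  \big[Num.max/head 0 s]_(x <- s) x.

(* Main.v *)
Require Import Defs.
From HB Require Import structures.
From mathcomp Require Import all_boot all_order all_algebra.
Import Order.TTheory GRing.Theory Num.Theory.
Local Open Scope ring_scope.

Lemma bigmax_ge (R : realFieldType) (e : R) (s : seq R) :
  e <= \big[Num.max/e]_(x <- s) x /\ forall y, y \in s -> y <= \big[Num.max/e]_(x <- s) x.
Proof.
elim: s => [|a s IHs]; first by rewrite big_nil; split => // y.
case: IHs => He IH.
rewrite big_cons; split.
  by rewrite le_max He orbT.
move=> y; rewrite inE => /orP[/eqP->|ys]; first by rewrite le_max lexx.
by rewrite le_max IH // orbT.
Qed.

Lemma bigmax_le (R : realFieldType) (e c : R) (s : seq R) :
  e <= c -> (forall y, y \in s -> y <= c) -> \big[Num.max/e]_(x <- s) x <= c.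
Proof.
move=> He H; elim: s H => [|a s IH] H; first by rewrite big_nil.
rewrite big_cons ge_max H ?mem_head // IH // => y ys.
by apply: H; rewrite inE ys orbT.
Qed.

Lemma max_sub (R : realFieldType) (T : eqType) (L : seq T) (f g h : T -> R) :
  (forall x, x \in L -> f x <= g x + h x) ->
  \big[Num.max/head 0 [seq f x | x <- L]]_(x <- [seq f x | x <- L]) x <=
  \big[Num.max/head 0 [seq g x | x <- L]]_(x <- [seq g x | x <- L]) x +
  \big[Num.max/head 0 [seq h x | x <- L]]_(x <- [seq h x | x <- L]) x.
Proof.
move=> H.
case: L H => [|x0 L] H; first by rewrite /= !big_nil addr0.
rewrite [head _ _]/= [head _ _]/= [head _ _]/=.
have [Hg1 Hg2] := @bigmax_ge R (g x0) ([seq g x | x <- x0 :: L]).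
have [Hh1 Hh2] := @bigmax_ge R (h x0) ([seq h x | x <- x0 :: L]).
apply: bigmax_le.
  by apply: le_trans (H _ (mem_head _ _)) _; apply: lerD.
move=> y /mapP [x xL] ->; apply: le_trans (H _ xL) _.
by apply: lerD; [apply: Hg2 | apply: Hh2]; apply: map_f.
Qed.

Lemma coarsen_distr (R : realFieldType) (n : nat) (P : {set {set 'I_n}})
  (p : 'I_n -> R) : partition P [set: 'I_n] -> is_distr p -> is_distr (@coarsen R n P p).
Proof.
move=> /and3P [/eqP Hc Ht _] [Hp1 Hp2]; split.
  by move=> a; apply: sumr_ge0 => i _.
rewrite /coarsen -(@big_sub _ _ _ _ (mem P) (fun A : {set 'I_n} => \sum_(i in A) p i)).
by rewrite -big_trivIset // Hc -Hp2; apply: eq_bigl => i; rewrite in_setT.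
Qed.

Theorem lemma4 (R : realFieldType) (phi : divergence R) (n k : nat)
  (hk : (1 <= k <= n)%N) (htri : triangle_ineq phi)
  (p q r : 'I_n -> R) (hp : is_distr p) (hq : is_distr q) (hr : is_distr r) :
  sketch phi k p q <= sketch phi k p r + sketch phi k r q.
Proof.
rewrite /sketch.
apply: (@max_sub R _ _ (fun P => sketch_val phi p q P)
                (fun P => sketch_val phi p r P)
                (fun P => sketch_val phi r q P)).
move=> P; rewrite mem_enum inE => /andP [HP _].
by apply: htri; apply: coarsen_distr.
Qed.
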